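(* Let $\mathbb{K}$ be a field, let $P_1, P_2 \in \mathbb{K}[X]$ be irreducible polynomials with $P_1' \neq 0$ and $P_2' \neq 0$, and let $k \geq 1$ be an integer. Then the rings $\mathbb{K}[X]/(P_1^k)$ and $\mathbb{K}[X]/(P_2^k)$ are isomorphic if and only if the fields $\mathbb{K}[X]/(P_1)$ and $\mathbb{K}[X]/(P_2)$ are isomorphic (as rings).
   Context: $\mathbb{K}$ is an arbitrary field; $P'$ denotes the formal derivative (for irreducible $P$, $P'\neq0$ means $P$ is separable). The rings $\mathbb{K}[X]/(P_i^k)$ are local with residue field $\mathbb{K}[X]/(P_i)$. *)

(* Defs.v *)
From HB Require Import structures.
From mathcomp Require Import all_boot all_order all_algebra.
Set Implicit Arguments. Unset Strict Implicit. Unset Printing Implicit Defensive.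
Import GRing.Theory.
Local Open Scope ring_scope.

(* The quotient ring K[X]/(p), realized with MathComp's qpoly construction.
   qpoly quotients by a monic polynomial of size > 1, so we quotient by the
   monic associate (lead_coef p)^-1 *: p, which generates the same ideal (p)
   whenever p != 0. *)
Definition quot_poly (K : fieldType) (p : {poly K}) : comNzRingType :=
  {poly %/ ((lead_coef p)^-1 *: p)}.

Definition ring_iso (A B : nzRingType) : Prop :=
  exists f : {rmorphism A -> B}, bijective f.

(* Main.v *)
Require Import Defs.
From HB Require Import structures.
From mathcomp Require Import all_boot all_order all_algebra.
From mathcomp Require Import ring.
Import GRing.Theory.
Local Open Scope ring_scope.
Set Implicit Arguments. Unset Strict Implicit. Unset Printing Implicit Defensive.
Section Inv.
Variables (R S : nzRingType) (f : {rmorphism R -> S}) (g : S -> R).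
Hypotheses (fK : cancel f g) (gK : cancel g f).
Fact inv_zmod : zmod_morphism g.
Proof. by move=> x y; rewrite -{1}(gK x) -{1}(gK y) -rmorphB fK. Qed.
Fact inv_monoid : monoid_morphism g.
Proof.
split; first by rewrite -(rmorph1 f) fK.
by move=> x y; rewrite -{1}(gK x) -{1}(gK y) -rmorphM fK.
Qed.
Definition ginv := g.
HB.instance Definition _ := GRing.isZmodMorphism.Build S R ginv inv_zmod.
HB.instance Definition _ := GRing.isMonoidMorphism.Build S R ginv inv_monoid.
Lemma ginv_ex : exists h : {rmorphism S -> R}, cancel f h /\ cancel h f.
Proof. by exists ginv. Qed.
End Inv.

Section Abstract.
Variables (A L : comNzRingType) (red : {rmorphism A -> L}) (s : {rmorphism L -> A}) (pi : A) (k : nat).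
Hypotheses (Hsec : cancel s red) (Hpk : pi ^+ k = 0) (Hredpi : red pi = 0)
 (HF3 : forall a, red a = 0 -> exists b, a = pi * b)
 (HF4 : forall m b, (m < k)%N -> pi ^+ m * b = 0 -> red b = 0).

Let cfu : commr_rmorph s pi := fun x => mulrC _ _.
Local Notation Psi := (horner_morph cfu).

Lemma Psi_XnC m c : Psi ('X^m * c%:P) = pi ^+ m * s c.
Proof. by rewrite rmorphM /= rmorphXn /= horner_morphX horner_morphC. Qed.

Lemma Psi_surj a : exists q, Psi q = a.
Proof.
suff H m : exists q b, a = Psi q + pi ^+ m * b.
  by have [q [b ->]] := H k; exists q; rewrite Hpk mul0r addr0.
elim: m => [|m [q [b ->]]]; first by exists 0, a; rewrite rmorph0 expr0 mul1r add0r.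
have /HF3 [b' Hb'] : red (b - s (red b)) = 0 by rewrite rmorphB /= Hsec subrr.
exists (q + 'X^m * (red b)%:P), b'.
rewrite rmorphD /= Psi_XnC exprSr -mulrA -Hb' -addrA -mulrDr.
by congr (_ + _ * _); rewrite addrC subrK.
Qed.

Lemma Psi_inj_small (r : {poly L}) : forall n, (size r + n <= k)%N -> pi ^+ n * Psi r = 0 -> r = 0.
Proof.
elim/poly_ind: r => [//|r c IH] n Hs H0.
have [->|rn0] := eqVneq (r * 'X + c%:P) 0; first by [].
have nk : (n < k)%N.
  rewrite -size_poly_gt0 in rn0; apply: leq_trans Hs.
  by rewrite [X in (_ <= X)%N]addnC -addn1 leq_add2l.
have Hc : c = 0.
  have := HF4 nk H0; rewrite /Psi /horner_morph rmorphD rmorphM /= map_polyX map_polyC.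
  by rewrite hornerD hornerMX hornerC rmorphD rmorphM /= Hredpi mulr0 add0r Hsec.
move: rn0 Hs H0; rewrite Hc polyC0 addr0 => rn0 Hs H0.
have r0 : r != 0 by apply: contraNneq rn0 => ->; rewrite mul0r.
rewrite (IH n.+1) ?mul0r //.
  by move: Hs; rewrite size_mulX // addSnnS.
by rewrite -H0 rmorphM /= horner_morphX exprSr -mulrA [pi * _]mulrC.
Qed.

Lemma Psi_ker q : Psi q = 0 -> exists w, q = w * 'X^k.
Proof.
move=> H; exists (drop_poly k q).
have E := poly_take_drop k q.
suff : take_poly k q = 0 by move: E => {2}<- ->; rewrite add0r.
apply: (@Psi_inj_small _ 0); first by rewrite addn0 size_take_poly.
rewrite expr0 mul1r; move: H; rewrite -{1}E rmorphD rmorphM /= rmorphXn /= horner_morphX Hpk mulr0 addr0 //.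
Qed.

Lemma Psi_Xk w : Psi (w * 'X^k) = 0.
Proof. by rewrite rmorphM rmorphXn /= horner_morphX Hpk mulr0. Qed.

End Abstract.

Definition good (A L : comNzRingType) (red : {rmorphism A -> L}) (s : {rmorphism L -> A}) (pi : A) (k : nat) :=
 [/\ cancel s red, pi ^+ k = 0, red pi = 0, (forall a, red a = 0 -> exists b, a = pi * b)
   & (forall m b, (m < k)%N -> pi ^+ m * b = 0 -> red b = 0)].

Section Transfer.
Variables (A1 L1 A2 L2 : comNzRingType) (red1 : {rmorphism A1 -> L1}) (s1 : {rmorphism L1 -> A1}) (pi1 : A1)
  (red2 : {rmorphism A2 -> L2}) (s2 : {rmorphism L2 -> A2}) (pi2 : A2) (k : nat).
Hypotheses (G1 : good red1 s1 pi1 k) (G2 : good red2 s2 pi2 k).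
Variable sig : {rmorphism L1 -> L2}.
Let cfu1 : commr_rmorph s1 pi1 := fun x => mulrC _ _.
Let cfu2 : commr_rmorph s2 pi2 := fun x => mulrC _ _.
Local Notation Psi1 := (horner_morph cfu1).
Local Notation Psi2 := (horner_morph cfu2).

Lemma surj1 a : exists q, Psi1 q == a.
Proof. case: G1 => H1 H2 H3 H4 H5; have [q Hq] := Psi_surj H1 H2 H4 a; by exists q; apply/eqP. Qed.

Definition pre1 a := xchoose (surj1 a).
Lemma pre1K a : Psi1 (pre1 a) = a.
Proof. exact/eqP/(xchooseP (surj1 a)). Qed.

Lemma transfer_eq q q' : Psi1 q = Psi1 q' -> Psi2 (map_poly sig q) = Psi2 (map_poly sig q').
Proof.
move=> E; have H : Psi1 (q - q') = 0 by rewrite rmorphB /= E subrr.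
have [w Hw] : exists w, q - q' = w * 'X^k by case: G1 => H1 H2 H3 H4 H5; apply: Psi_ker H.
apply/eqP; rewrite -subr_eq0 -!rmorphB /= Hw rmorphM /= map_polyXn.
by case: G2 => H1 H2 H3 H4 H5; apply/eqP; apply: Psi_Xk.
Qed.

Definition Phi a := Psi2 (map_poly sig (pre1 a)).

Lemma Phi_Psi q : Phi (Psi1 q) = Psi2 (map_poly sig q).
Proof. by apply: transfer_eq; rewrite pre1K. Qed.

Fact Phi_zmod : zmod_morphism Phi.
Proof.
move=> a b; rewrite -{1}(pre1K a) -{1}(pre1K b) -rmorphB Phi_Psi.
by rewrite !rmorphB.
Qed.
Fact Phi_monoid : monoid_morphism Phi.
Proof.
split; first by rewrite -(rmorph1 Psi1) Phi_Psi !rmorph1.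
by move=> a b; rewrite -{1}(pre1K a) -{1}(pre1K b) -rmorphM Phi_Psi !rmorphM.
Qed.
HB.instance Definition _ := GRing.isZmodMorphism.Build A1 A2 Phi Phi_zmod.
HB.instance Definition _ := GRing.isMonoidMorphism.Build A1 A2 Phi Phi_monoid.
Lemma Phi_ex : exists F : {rmorphism A1 -> A2}, forall q, F (Psi1 q) = Psi2 (map_poly sig q).
Proof. by exists Phi; apply: Phi_Psi. Qed.
End Transfer.

Lemma transfer_iso (A1 L1 A2 L2 : comNzRingType) (red1 : {rmorphism A1 -> L1}) (s1 : {rmorphism L1 -> A1}) (pi1 : A1)
  (red2 : {rmorphism A2 -> L2}) (s2 : {rmorphism L2 -> A2}) (pi2 : A2) (k : nat) :
  good red1 s1 pi1 k -> good red2 s2 pi2 k -> ring_iso L1 L2 -> ring_iso A1 A2.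
Proof.
move=> G1 G2 [sig [sig' K1 K2]].
have [sig'' [K1' K2']] := ginv_ex K1 K2.
have [F HF] := Phi_ex G1 G2 sig.
have [F' HF'] := Phi_ex G2 G1 sig''.
exists F; exists F'.
  move=> a; rewrite -(pre1K G1 a) HF HF' -map_poly_comp.
  by rewrite (eq_map_poly K1') map_poly_id.
move=> a; rewrite -(pre1K G2 a) HF' HF -map_poly_comp.
by rewrite (eq_map_poly K2') map_poly_id.
Qed.

Lemma forward_iso (A1 L1 A2 L2 : comNzRingType) (red1 : {rmorphism A1 -> L1}) (s1 : {rmorphism L1 -> A1}) (pi1 : A1)
  (red2 : {rmorphism A2 -> L2}) (s2 : {rmorphism L2 -> A2}) (pi2 : A2) (k : nat) :
  good red1 s1 pi1 k -> good red2 s2 pi2 k ->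
  (forall (x : L1) n, x ^+ n = 0 -> x = 0) -> (forall (x : L2) n, x ^+ n = 0 -> x = 0) ->
  ring_iso A1 A2 -> ring_iso L1 L2.
Proof.
move=> [S1 P1 R1 F1 _] [S2 P2 R2 F2 _] N1 N2 [f [g K1 K2]].
have [g' [K1' K2']] := ginv_ex K1 K2.
have nil1 a : red1 a = 0 -> a ^+ k = 0 by move=> /F1 [b ->]; rewrite exprMn P1 mul0r.
have nil2 a : red2 a = 0 -> a ^+ k = 0 by move=> /F2 [b ->]; rewrite exprMn P2 mul0r.
exists (red2 \o f \o s1); exists (red1 \o g' \o s2) => a /=.
  set b := f (s1 a).
  have Hc : red2 (s2 (red2 b) - b) = 0 by rewrite rmorphB /= S2 subrr.
  have Hc' : red1 (g' (s2 (red2 b) - b)) = 0.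
    by apply: (N1 _ k); rewrite -!rmorphXn /= nil2 // !rmorph0.
  by move: Hc'; rewrite !rmorphB /= K1' S1 => /eqP; rewrite subr_eq0 => /eqP.
set b := g' (s2 a).
have Hc : red1 (s1 (red1 b) - b) = 0 by rewrite rmorphB /= S1 subrr.
have Hc' : red2 (f (s1 (red1 b) - b)) = 0.
  by apply: (N2 _ k); rewrite -!rmorphXn /= nil1 // !rmorph0.
by move: Hc'; rewrite !rmorphB /= K2' S2 => /eqP; rewrite subr_eq0 => /eqP.
Qed.
Lemma taylor1 (R : comNzRingType) (p : {poly R}) (a h : R) :
  exists W, p.[a + h] = p.[a] + p^`().[a] * h + h ^+ 2 * W.
Proof.
elim/poly_ind: p => [|q c [W HW]]; first by exists 0; rewrite deriv0 !horner0; ring.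
exists (q^`().[a] + W * (a + h)).
rewrite derivMXaddC !hornerMXaddC HW hornerD hornerMX; ring.
Qed.

Lemma comp_taylor (K : fieldType) (p a h : {poly K}) :
  exists W, p \Po (a + h) = p \Po a + (p^`() \Po a) * h + h ^+ 2 * W.
Proof.
have [W HW] := taylor1 (p ^:P) a h.
by exists W; rewrite /comp_poly HW deriv_map.
Qed.

Lemma comp_diff (K : fieldType) (p Y : {poly K}) d : d %| Y - 'X -> d %| p \Po Y - p.
Proof.
have [W HW] := comp_taylor p 'X (Y - 'X).
rewrite addrC subrK comp_polyXr in HW.
rewrite HW; have -> : p + (p^`() \Po 'X) * (Y - 'X) + (Y - 'X) ^+ 2 * W - p =
  ((p^`() \Po 'X) + (Y - 'X) * W) * (Y - 'X) by ring.
by move=> H; rewrite dvdp_mull.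
Qed.

Lemma hensel (K : fieldType) (P : {poly K}) (k : nat) :
  coprimep P P^`() -> exists Y, (P ^+ k.+1 %| P \Po Y) && (P %| Y - 'X).
Proof.
move=> /Bezout_eq1_coprimepP [[u V] /= HB].
elim: k => [|m [Y /andP [/dvdpP [w Hw] /dvdpP [v Hv]]]].
  by exists 'X; rewrite comp_polyXr expr1 dvdpp subrr dvdp0.
have [t Ht] : exists t, P^`() \Po Y = P^`() + t * P.
  have -> : Y = 'X + (Y - 'X) by rewrite addrC subrK.
  have [W HW] := comp_taylor P^`() 'X (Y - 'X).
  exists ((P^`()^`() \Po 'X) * v + v * P * v * W).
  by rewrite HW comp_polyXr Hv; ring.
set h := - (w * P ^+ m.+1) * V.
exists (Y + h); apply/andP; split; last first.
  apply/dvdpP; exists (v - w * P ^+ m * V).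
  by rewrite addrAC Hv /h exprS; ring.
have [W HW] := comp_taylor P Y h.
apply/dvdpP; exists (w * u - t * w * V + w ^+ 2 * P ^+ m * V ^+ 2 * W).
rewrite HW Hw Ht /h !exprS.
have HB' : V * P^`() = 1 - u * P by rewrite -HB; ring.
apply/eqP; rewrite -subr_eq0; apply/eqP.
have E : V * P^`() - 1 + u * P = 0 by rewrite HB'; ring.
rewrite -(mulr0 (- (w * (P * P ^+ m)))) -E; ring.
Qed.
Definition nm (K : fieldType) (d : {poly K}) := (lead_coef d)^-1 *: d.

Section QLemmas.
Variables (K : fieldType) (d : {poly K}).
Hypotheses (dn0 : d != 0) (sd : (1 < size d)%N).

Lemma mk_monic_nm : mk_monic (nm d) = nm d.
Proof.
have lc : (lead_coef d)^-1 != 0 by rewrite invr_neq0 // lead_coef_eq0.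
rewrite /mk_monic size_scale // sd /= monicE /nm lead_coefZ mulVf ?lead_coef_eq0 // ifT //; exact: eqxx.
Qed.

Lemma val_in_nm p : val (in_qpoly (nm d) p) = Pdiv.CommonRing.rmodp p (nm d).
Proof. by rewrite /= mk_monic_nm. Qed.

Lemma in_nm_eq0 p : (in_qpoly (nm d) p == 0) = (d %| p).
Proof.
have lc : (lead_coef d)^-1 != 0 by rewrite invr_neq0 // lead_coef_eq0.
rewrite -val_eqE val_in_nm /= -(dvdpZl _ _ lc) Pdiv.WeakIdomain.dvdpE.
by [].
Qed.
End QLemmas.

Lemma in_val (K : fieldType) (d : {poly K}) (a : {poly %/ d}) : in_qpoly d (val a) = a.
Proof. by apply: val_inj => /=; rewrite Pdiv.CommonRing.rmodp_small // size_mk_monic. Qed.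

Lemma prime_dvd (K : fieldType) (P a : {poly K}) n : irreducible_poly P -> P %| a ^+ n -> P %| a.
Proof.
move=> Pirr H; apply/negPn/negP => Hn.
have cp : coprimep P (a ^+ n) by apply: coprimep_expr; rewrite irreducible_poly_coprime.
move: H; rewrite -[a ^+ n]mul1r Gauss_dvdpl // dvdp1 => /eqP Hs.
by case: Pirr; rewrite Hs.
Qed.

Section Concrete.
Variables (K : fieldType) (P : {poly K}) (k : nat).
Hypotheses (Pirr : irreducible_poly P) (Pd : P^`() != 0) (k1 : (1 <= k)%N).

Let Pn0 : P != 0. Proof. exact: irredp_neq0. Qed.
Let sP : (1 < size P)%N. Proof. by case: Pirr. Qed.
Let Qn0 : P ^+ k != 0. Proof. exact: expf_neq0. Qed.
Let sQ : (1 < size (P ^+ k))%N.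
Proof.
have := size_exp P k; have := size_poly_gt0 (P ^+ k); rewrite Qn0.
case: (size (P ^+ k)) => // [[|n]] _ //= H.
by move: H; case: (size P) sP => // [[|j]] //= _; rewrite mulSn; case: k k1.
Qed.

Local Notation inA := (in_qpoly (nm (P ^+ k))).
Local Notation inL := (in_qpoly (nm P)).

Lemma cop : coprimep P P^`().
Proof.
rewrite irreducible_poly_coprime //; apply/negP => /(dvdp_leq Pd).
by rewrite leqNgt lt_size_deriv.
Qed.

Definition Yh := xchoose (hensel k.-1 cop).
Lemma Yh_spec : (P ^+ k %| P \Po Yh) && (P %| Yh - 'X).
Proof. move: (xchooseP (hensel k.-1 cop)); rewrite /Yh; set Y := xchoose _; by rewrite prednK. Qed.

Lemma PdQ : P %| P ^+ k.
Proof. by rewrite -{1}(expr1 P) dvdp_exp2l. Qed.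

Definition red_f (a : quot_poly (P ^+ k)) : quot_poly P := inL (val a).

Lemma red_in p : red_f (inA p) = inL p.
Proof.
rewrite /red_f val_in_nm //; apply/eqP; rewrite -subr_eq0 -rmorphB in_nm_eq0 //.
have mo : nm (P ^+ k) \is monic by rewrite -mk_monic_nm //; exact: monic_mk_monic.
rewrite {2}(Pdiv.RingMonic.rdivp_eq mo p) opprD addrCA subrr addr0 dvdpNr dvdp_mull //.
by rewrite dvdpZr ?PdQ // invr_neq0 // lead_coef_eq0.
Qed.

Fact red_zmod : zmod_morphism red_f.
Proof. by move=> a b; rewrite /red_f -rmorphB. Qed.
Fact red_monoid : monoid_morphism red_f.
Proof.
split; first by rewrite -(rmorph1 inA) red_in rmorph1.
by move=> a b; rewrite -{1}(in_val a) -{1}(in_val b) -rmorphM red_in rmorphM.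
Qed.
HB.instance Definition _ := GRing.isZmodMorphism.Build _ _ red_f red_zmod.
HB.instance Definition _ := GRing.isMonoidMorphism.Build _ _ red_f red_monoid.


Definition s_f (l : quot_poly P) : quot_poly (P ^+ k) := inA (val l \Po Yh).

Lemma s_mod x : inA ((Pdiv.CommonRing.rmodp x (nm P)) \Po Yh) = inA (x \Po Yh).
Proof.
apply/eqP; rewrite -subr_eq0 -rmorphB in_nm_eq0 //.
have mo : nm P \is monic by rewrite -mk_monic_nm //; exact: monic_mk_monic.
rewrite {2}(Pdiv.RingMonic.rdivp_eq mo x) comp_polyD comp_polyM opprD addrCA subrr addr0.
rewrite dvdpNr dvdp_mull // /nm comp_polyZ dvdpZr ?invr_neq0 ?lead_coef_eq0 //.
by case/andP: Yh_spec.
Qed.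

Lemma s_in p : s_f (inL p) = inA (p \Po Yh).
Proof. by rewrite /s_f val_in_nm // s_mod. Qed.

Fact s_zmod : zmod_morphism s_f.
Proof. by move=> a b; rewrite /s_f -rmorphB -comp_polyB. Qed.
Fact s_monoid : monoid_morphism s_f.
Proof.
split; first by rewrite -(rmorph1 inL) s_in -polyC1 comp_polyC polyC1 rmorph1.
by move=> a b; rewrite -{1}(in_val a) -{1}(in_val b) -rmorphM s_in comp_polyM rmorphM.
Qed.
HB.instance Definition _ := GRing.isZmodMorphism.Build _ _ s_f s_zmod.
HB.instance Definition _ := GRing.isMonoidMorphism.Build _ _ s_f s_monoid.

Lemma s_sec : cancel s_f red_f.
Proof.
move=> l; rewrite /s_f red_in -[RHS]in_val; apply/eqP; rewrite -subr_eq0 -rmorphB in_nm_eq0 //.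
by apply: comp_diff; case/andP: Yh_spec.
Qed.

Lemma concrete_good : exists (red : {rmorphism quot_poly (P ^+ k) -> quot_poly P})
  (s : {rmorphism quot_poly P -> quot_poly (P ^+ k)}) (pi : quot_poly (P ^+ k)),
  good red s pi k /\ (forall (x : quot_poly P) n, x ^+ n = 0 -> x = 0).
Proof.
exists red_f, s_f, (inA P); split.
  split.
  - exact: s_sec.
  - by apply/eqP; rewrite -rmorphXn in_nm_eq0.
  - by apply/eqP; rewrite /= red_in in_nm_eq0.
  - move=> a /eqP; rewrite /= /red_f in_nm_eq0 // => /dvdpP [w Hw].
    by exists (inA w); rewrite -(in_val a) Hw rmorphM mulrC.
  - move=> m b mk; rewrite -(in_val b) -rmorphXn -rmorphM => /eqP.
    rewrite in_nm_eq0 // => H.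
    have E : P ^+ k = P ^+ m * P ^+ (k - m) by rewrite -exprD subnKC // ltnW.
    have {H} : P ^+ m * P ^+ (k - m) %| P ^+ m * val b by rewrite -E.
    rewrite dvdp_mul2l ?expf_neq0 // => H.
    apply/eqP; rewrite /= /red_f in_nm_eq0 // in_val; apply: (dvdp_trans _ H).
    by rewrite -{1}(expr1 P) dvdp_exp2l // subn_gt0.
move=> x n; rewrite -(in_val x) -rmorphXn => /eqP; rewrite !in_nm_eq0 // => H.
by apply/eqP; rewrite in_nm_eq0 //; apply: prime_dvd H.
Qed.

End Concrete.

Unset Implicit Arguments. Set Strict Implicit. Set Printing Implicit Defensive.

Theorem mainTheorem6 (K : fieldType) (P1 P2 : {poly K}) (k : nat) :
  irreducible_poly P1 -> irreducible_poly P2 ->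
  P1^`() != 0 -> P2^`() != 0 -> (1 <= k)%N ->
  (ring_iso (quot_poly (P1 ^+ k)) (quot_poly (P2 ^+ k)) <->
   ring_iso (quot_poly P1) (quot_poly P2)).
Proof.
move=> I1 I2 D1 D2 k1.
have [r1 [s1 [p1 [G1 N1]]]] := concrete_good I1 D1 k1.
have [r2 [s2 [p2 [G2 N2]]]] := concrete_good I2 D2 k1.
split=> H; first exact: (forward_iso G1 G2 N1 N2 H).
exact: (transfer_iso G1 G2 H).
Qed.
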